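(* Let $0<q<1$ and let $A_q(t)=\sum_{n=0}^{\infty}A_{n,q}\dfrac{t^n}{[n]_q!}$ be a power series, analytic at $t=0$, with $A_q(0)=A_{0,q}\neq 0$. Define the $q$-Appell polynomials $A_{n,q}(x)$ by \[ A_q(t)\,e_q(tx)=\sum_{n=0}^{\infty}A_{n,q}(x)\frac{t^n}{[n]_q!}. \] Assume that \[ t\,\frac{D_{q,t}A_q(t)}{A_q(qt)}=\sum_{n=0}^{\infty}\alpha_n\frac{t^n}{[n]_q!}. \] Then for every positive integer $n$ the polynomial $A_{n,q}(x)$ satisfies the $q$-difference equation \[ \sum_{k=0}^{n}\frac{q^{n-k}\alpha_k}{[k]_q!}D_{q,x}^{k}A_{n,q}(x)+x\,q^{n}D_{q,x}A_{n,q}(x)-[n]_qA_{n,q}(qx)=0, \] i.e. \[ \frac{\alpha_n}{[n]_q!}D_{q,x}^nA_{n,q}(x)+\frac{q\alpha_{n-1}}{[n-1]_q!}D_{q,x}^{n-1}A_{n,q}(x)+\dots+\frac{q^{n-1}\alpha_1}{[1]_q!}D_{q,x}A_{n,q}(x)+\frac{q^n\alpha_0}{[0]_q!}A_{n,q}(x)+xq^nD_{q,x}A_{n,q}(x)-[n]_qA_{n,q}(qx)=0. \]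
   Context: $[n]_q=\frac{1-q^n}{1-q}$, $[0]_q!=1$, $[n]_q!=[n]_q[n-1]_q\cdots[1]_q$. The $q$-exponential is $e_q(t)=\sum_{n=0}^\infty \frac{t^n}{[n]_q!}$. The $q$-derivative is $D_{q,x}f(x)=\frac{f(qx)-f(x)}{(q-1)x}$ (for $x\neq0$; on polynomials/power series $D_{q,x}x^n=[n]_qx^{n-1}$); $D_{q,t}$ is the same operator in the variable $t$, and $D_{q,x}^k$ denotes the $k$-fold iterate ($D_{q,x}^0$ = identity). *)

(* Defs.v *)
From HB Require Import structures.
From mathcomp Require Import all_boot all_order all_algebra.
From mathcomp Require Import all_classical all_reals all_analysis.
Set Implicit Arguments. Unset Strict Implicit. Unset Printing Implicit Defensive.
Import Order.TTheory GRing.Theory Num.Theory.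
Local Open Scope ring_scope.

Section QCalc.
Variable R : realType.

Definition qint (q : R) (n : nat) : R := (1 - q ^+ n) / (1 - q).

Definition qfact (q : R) (n : nat) : R := \prod_(i < n) qint q i.+1.

(* q-derivative on polynomials: D_{q,x} x^n = [n]_q x^(n-1), extended linearly *)
Definition qderiv (q : R) (p : {poly R}) : {poly R} :=
  \poly_(i < (size p).-1) (qint q i.+1 * p`_i.+1).

Definition qderivn (q : R) (k : nat) (p : {poly R}) : {poly R} :=
  iter k (qderiv q) p.

(* Formal power series in t, given by their ordinary coefficient sequence
   (f n = coefficient of t^n). *)
Definition fps := nat -> R.

(* the series sum_n c_n t^n/[n]_q! *)
Definition qexp_series (q : R) (c : nat -> R) : fps := fun n => c n / qfact q n.

Definition fps_mul (f g : fps) : fps :=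
  fun n => \sum_(k < n.+1) f k * g (n - k)%N.

(* D_{q,t} on formal power series: D_q t^n = [n]_q t^(n-1) *)
Definition fps_qderiv (q : R) (f : fps) : fps := fun n => qint q n.+1 * f n.+1.

Definition fps_mulX (f : fps) : fps :=
  fun n => if n is m.+1 then f m else 0.

(* f(t) |-> f(c t) *)
Definition fps_scale (c : R) (f : fps) : fps := fun n => c ^+ n * f n.

(* q-Appell polynomials: A_{n,q}(x) is [n]_q! times the coefficient of t^n in
   the Cauchy product A_q(t) e_q(tx), where A_q(t) = sum a_n t^n/[n]_q!
   and e_q(tx) = sum x^m t^m/[m]_q!. *)
Definition qAppell (q : R) (a : nat -> R) (n : nat) : {poly R} :=
  qfact q n *: \sum_(k < n.+1)
     ((a k / qfact q k) * (1 / qfact q (n - k)%N)) *: 'X^(n - k).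

End QCalc.

(* Main.v *)
Require Import Defs.
From HB Require Import structures.
From mathcomp Require Import all_boot all_order all_algebra.
From mathcomp Require Import all_classical all_reals all_analysis.
From mathcomp Require Import ring lra zify.
Import Order.TTheory GRing.Theory Num.Theory.
Import numFieldNormedType.Exports.
Local Open Scope ring_scope.

Lemma qint0 (R : realType) (q : R) : qint q 0 = 0.
Proof. by rewrite /qint expr0 subrr mul0r. Qed.

Lemma qint_gt0 (R : realType) (q : R) j : 0 < q -> q < 1 -> 0 < qint q j.+1.
Proof.
move=> q0 q1; rewrite /qint; apply: divr_gt0; rewrite subr_gt0 //.
by rewrite exprn_ilt1 // ltW.
Qed.

Lemma qfact_gt0 (R : realType) (q : R) j : 0 < q -> q < 1 -> 0 < qfact q j.
Proof. by move=> q0 q1; rewrite /qfact; apply: prodr_gt0 => i _; exact: qint_gt0. Qed.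

Lemma qfactS (R : realType) (q : R) j : qfact q j.+1 = qfact q j * qint q j.+1.
Proof. by rewrite /qfact big_ord_recr. Qed.

Lemma coef_qderiv (R : realType) (q : R) p i :
  (qderiv q p)`_i = qint q i.+1 * p`_i.+1.
Proof.
rewrite /qderiv coef_poly; case: ifP => // /negbT; rewrite -leqNgt => H.
rewrite nth_default ?mulr0 //; move: H; by case: (size p).
Qed.

Lemma coef_qAppell (R : realType) (q : R) a n j :
  (qAppell q a n)`_j = if (j <= n)%N then
     qfact q n * (a (n - j)%N / qfact q (n - j)%N / qfact q j) else 0.
Proof.
have -> : qAppell q a n = \poly_(j < n.+1)
    (qfact q n * (a (n - j)%N / qfact q (n - j)%N / qfact q j)).
  rewrite /qAppell poly_def scaler_sumr (reindex_inj rev_ord_inj) /=.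
  apply: eq_bigr => k _; rewrite scalerA subSS subKn ?leq_ord //.
  by rewrite mul1r.
by rewrite coef_poly ltnS.
Qed.

Lemma coef_qderivn (R : realType) (q : R) a n k i : 0 < q -> q < 1 ->
  (qderivn q k (qAppell q a n))`_i = if (i + k <= n)%N then
     qfact q n * (a (n - i - k)%N / qfact q (n - i - k)%N / qfact q i) else 0.
Proof.
move=> q0 q1; elim: k i => [|k IH] i.
  by rewrite /qderivn /= addn0 subn0 coef_qAppell.
rewrite /qderivn iterS -/(qderivn q k _) coef_qderiv IH addSnnS.
case: ifP => _; last by rewrite mulr0.
have -> : (n - i.+1 - k = n - i - k.+1)%N by lia.
rewrite qfactS.
have h1 := @qint_gt0 _ q i q0 q1. have h2 := @qfact_gt0 _ q i q0 q1.
have h3 := @qfact_gt0 _ q (n - i - k.+1) q0 q1.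
field; lra.
Qed.

Lemma coef_XD (R : realType) (q : R) p i :
  ('X * qderiv q p)`_i = qint q i * p`_i.
Proof.
by rewrite coefXM; case: i => [|i] /=; rewrite ?qint0 ?mul0r // coef_qderiv.
Qed.

Lemma sum_if_le (R : realType) n m (G : nat -> R) : (m <= n)%N ->
  \sum_(k < n.+1) (if (k <= m)%N then G k else 0) = \sum_(k < m.+1) G k.
Proof.
move=> mn; rewrite -(big_mkord xpredT G) -(big_mkord xpredT (fun k => if (k <= m)%N then G k else 0)) (big_cat_nat _ (n:=m.+1)) //=.
have -> : \sum_(m.+1 <= i < n.+1) (if (i <= m)%N then G i else 0) = 0.
  by rewrite big_nat_cond big1 // => k /andP [/andP [hk _] _]; rewrite leqNgt hk.
rewrite addr0; apply: eq_big_nat => k /andP [_ hk]; by rewrite -ltnS hk.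
Qed.

Lemma fps_mulX_qderiv (R : realType) (q : R) f m :
  fps_mulX (fps_qderiv q f) m = qint q m * f m.
Proof. by case: m => [|m] /=; rewrite ?qint0 ?mul0r. Qed.

Theorem theorem2 (R : realType) (q : R) (a alpha : nat -> R) :
  0 < q -> q < 1 ->
  (* A_q(t) = sum a_n t^n/[n]_q! is analytic at t = 0 *)
  (exists r : R, 0 < r /\
     cvgn (series (fun n => `|a n / qfact q n| * r ^+ n) : nat -> R)) ->
  (* A_q(0) = A_{0,q} <> 0 *)
  a 0%N != 0 ->
  (* t D_{q,t} A_q(t) / A_q(qt) = sum alpha_n t^n/[n]_q!, i.e. (A_q(qt) having
     nonzero constant term) sum alpha_n t^n/[n]_q! is the formal quotient *)
  fps_mul (qexp_series q alpha) (fps_scale q (qexp_series q a))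
    = fps_mulX (fps_qderiv q (qexp_series q a)) ->
  forall n : nat, (0 < n)%N ->
  forall x : R,
    \sum_(k < n.+1)
        (q ^+ (n - k) * alpha k / qfact q k) * (qderivn q k (qAppell q a n)).[x]
    + x * q ^+ n * (qderiv q (qAppell q a n)).[x]
    - qint q n * (qAppell q a n).[q * x] = 0.
Proof.
move=> q0 q1 _ _ H n _ x.
set P := qAppell q a n.
have hor : forall p : {poly R}, (forall j, (n < j)%N -> p`_j = 0) ->
    forall y, p.[y] = \sum_(i < n.+1) p`_i * y ^+ i.
  move=> p hp y; apply: horner_coef_wide; apply/leq_sizeP => j hj; exact: hp.
have hD : forall k y, (qderivn q k P).[y] =
    \sum_(i < n.+1) (qderivn q k P)`_i * y ^+ i.
  move=> k y; apply: hor => j hj; rewrite coef_qderivn //.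
  by case: ifP => //; lia.
have hP : forall y, P.[y] = \sum_(i < n.+1) P`_i * y ^+ i.
  move=> y; apply: hor => j hj; rewrite coef_qAppell; by case: ifP => //; lia.
have hX : x * q ^+ n * (qderiv q P).[x] =
    q ^+ n * \sum_(i < n.+1) ('X * qderiv q P)`_i * x ^+ i.
  rewrite -hor; first by rewrite hornerM hornerX; ring.
  move=> j hj; rewrite coef_XD coef_qAppell; case: ifP => [|_]; [lia | by rewrite mulr0].
rewrite hX hP (eq_bigr (fun k : 'I_n.+1 => \sum_(i < n.+1)
   (q ^+ (n - k) * alpha k / qfact q k) * ((qderivn q k P)`_i * x ^+ i))); last first.
  by move=> k _; rewrite hD mulr_sumr.
rewrite exchange_big /= !mulr_sumr -sumrN -!big_split /=.
apply: big1 => i _.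
have iln : (i <= n)%N by rewrite -ltnS ltn_ord.
rewrite coef_XD coef_qAppell -ltnS ltn_ord.
rewrite (eq_bigr (fun k : 'I_n.+1 => if (k <= n - i)%N then
    (q ^+ (n - k) * alpha k / qfact q k) *
     (qfact q n * (a (n - i - k)%N / qfact q (n - i - k)%N / qfact q i)) * x ^+ i
    else 0)); last first.
  move=> k _; rewrite coef_qderivn //.
  rewrite -leq_subRL //.
  case: (k <= n - i)%N; first by rewrite !mulrA.
  by rewrite mul0r mulr0.
rewrite (@sum_if_le _ n (n - i)%N (fun k : nat => q ^+ (n - k) * alpha k / qfact q k *
     (qfact q n * (a (n - i - k)%N / qfact q (n - i - k)%N / qfact q i)) * x ^+ i)) ?leq_subr //.
set m := (n - i)%N.
have Hm : fps_mul (qexp_series q alpha) (fps_scale q (qexp_series q a)) m = fps_mulX (fps_qderiv q (qexp_series q a)) m by rewrite H.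
rewrite fps_mulX_qderiv /fps_mul /qexp_series /fps_scale in Hm.
have -> : \sum_(k < m.+1) q ^+ (n - k) * alpha k / qfact q k *
      (qfact q n * (a (m - k)%N / qfact q (m - k)%N / qfact q i)) * x ^+ i
    = qfact q n / qfact q i * q ^+ i * x ^+ i *
      \sum_(k < m.+1) alpha k / qfact q k * (q ^+ (m - k) * (a (m - k)%N / qfact q (m - k)%N)).
  rewrite mulr_sumr; apply: eq_bigr => k _.
  have -> : (n - k = i + (m - k))%N by have := ltn_ord k; rewrite /m; lia.
  rewrite exprD; ring.
rewrite Hm.
have En : q ^+ n = q ^+ m * q ^+ i by rewrite -exprD subnK.
rewrite /qint En.
have hq : 1 - q != 0 by rewrite subr_eq0 eq_sym lt_eqF.
have := @qfact_gt0 _ q i q0 q1 => hi.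
have := @qfact_gt0 _ q m q0 q1 => hm.
rewrite exprMn.
move: (q ^+ i) (q ^+ m) (x ^+ i) (qfact q n) (qfact q m) (qfact q i) hi hm (a m) hq.
move=> y z w F Q I hI hQ A hq'.
have hQ' : Q != 0 by rewrite gt_eqF.
have hI' : I != 0 by rewrite gt_eqF.
by field; rewrite hI' hQ' hq'.
Qed.
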